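(* Let $N\ge1$, $0=\tau_0<\cdots<\tau_N=1$, $\Delta_i=\tau_{i+1}-\tau_i$, $D_2=\sum_i\Delta_i^2$, $0<\omega<1/N$ and $\mathcal W_\omega=\{w\in\mathbb R^N:w_i\ge\omega\ \forall i,\ \sum_iw_i=1\}$. Fix $\varepsilon_a>0$, nonnegative weights $K_\sigma(i,\ell)$ with $\sum_\ell K_\sigma(i,\ell)=1$, numbers $\widehat{\mathcal A}_i\ge0$ and $\mathcal A_i\ge0$. Define $\widehat b_i=\sum_\ell K_\sigma(i,\ell)\sqrt{\widehat{\mathcal A}_\ell+\varepsilon_a}$, $\widehat\phi_i=\widehat b_i^2$, $\widehat w_i=\Delta_i\widehat b_i/\sum_\ell\Delta_\ell\widehat b_\ell$, $b_i^\star=\sum_\ell K_\sigma(i,\ell)\sqrt{\mathcal A_\ell+\varepsilon_a}$, $\phi_i^\star=(b_i^\star)^2$, and $\mathcal J_{\sigma,\varepsilon_a}(w)=\sum_i\phi_i^\star\Delta_i^2/w_i$. Assume $\widehat w\in\mathcal W_\omega$ and let $w^\star_{\sigma,\varepsilon_a}=\arg\min_{w\in\mathcal W_\omega}\mathcal J_{\sigma,\varepsilon_a}(w)$. If $\zeta\ge0$ and $\max_i|\widehat\phi_i-\phi_i^\star|\le\zeta$, then $$\mathcal J_{\sigma,\varepsilon_a}(\widehat w)\le\mathcal J_{\sigma,\varepsilon_a}(w^\star_{\sigma,\varepsilon_a})+\frac{2D_2}{\omega}\zeta.$$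
   Context: In the paper, $\widehat{\mathcal A}_i$ are empirical averages of interval-wise local-error coefficients over calibration trajectories and $\mathcal A_i$ their population means. *)

(* Defs.v *)
From mathcomp Require Import all_boot all_order all_algebra.
Set Implicit Arguments. Unset Strict Implicit. Unset Printing Implicit Defensive.
Import Order.TTheory GRing.Theory Num.Theory.
Local Open Scope ring_scope.

Section Defs.
Variables (R : rcfType) (N : nat).

Definition Delta (tau : nat -> R) (i : 'I_N) : R := tau i.+1 - tau i.

Definition D2 (tau : nat -> R) : R := \sum_(i < N) Delta tau i ^+ 2.

Definition Wset (omega : R) (w : 'I_N -> R) : Prop :=
  (forall i, omega <= w i) /\ \sum_(i < N) w i = 1.

Definition bcoef (K : 'I_N -> 'I_N -> R) (A : 'I_N -> R) (eps : R) (i : 'I_N) : R :=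
  \sum_(l < N) K i l * Num.sqrt (A l + eps).

Definition phi (K : 'I_N -> 'I_N -> R) (A : 'I_N -> R) (eps : R) (i : 'I_N) : R :=
  bcoef K A eps i ^+ 2.

Definition what (tau : nat -> R) (K : 'I_N -> 'I_N -> R) (A : 'I_N -> R) (eps : R)
  (i : 'I_N) : R :=
  Delta tau i * bcoef K A eps i / \sum_(l < N) Delta tau l * bcoef K A eps l.

Definition Jobj (tau : nat -> R) (K : 'I_N -> 'I_N -> R) (A : 'I_N -> R) (eps : R)
  (w : 'I_N -> R) : R :=
  \sum_(i < N) phi K A eps i * Delta tau i ^+ 2 / w i.

End Defs.

(* Main.v *)
Require Import Defs.
From mathcomp Require Import all_boot all_order all_algebra.
From mathcomp Require Import ring lra.
Import Order.TTheory GRing.Theory Num.Theory.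
Local Open Scope ring_scope.

Lemma cs_ineq (R : realFieldType) n (a w : 'I_n -> R) :
  (forall i, 0 < w i) -> \sum_(i < n) w i = 1 ->
  (\sum_(i < n) a i) ^+ 2 <= \sum_(i < n) a i ^+ 2 / w i.
Proof.
move=> wp ws; set S := \sum_(i < n) a i.
have key i : 2%:R * S * a i - S ^+ 2 * w i <= a i ^+ 2 / w i.
  rewrite -subr_ge0.
  have -> : a i ^+ 2 / w i - (2%:R * S * a i - S ^+ 2 * w i) = (a i - S * w i) ^+ 2 / w i.
    by field; rewrite gt_eqF.
  by rewrite divr_ge0 ?sqr_ge0 ?ltW.
apply: le_trans (ler_sum _ (fun i _ => key i)).
rewrite sumrB -!mulr_sumr ws -/S; lra.
Qed.

Lemma perturb (R : realFieldType) n (d w p1 p2 : 'I_n -> R) (om z : R) :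
  0 < om -> (forall i, om <= w i) -> (forall i, `|p1 i - p2 i| <= z) ->
  \sum_(i < n) p1 i * d i ^+ 2 / w i <=
  \sum_(i < n) p2 i * d i ^+ 2 / w i + 2%:R * (\sum_(i < n) d i ^+ 2) / om * z / 2%:R.
Proof.
move=> omp wo pz.
have -> : 2%:R * (\sum_(i < n) d i ^+ 2) / om * z / 2%:R = \sum_(i < n) z * d i ^+ 2 / om.
  rewrite -mulr_suml -mulr_sumr; by field; rewrite ?gt_eqF.
rewrite -big_split /=; apply: ler_sum => i _.
have wp : 0 < w i by apply: lt_le_trans (wo i).
rewrite -!(mulrA _ (d i ^+ 2)).
set q := d i ^+ 2 / w i.
have q0 : 0 <= q by rewrite divr_ge0 ?sqr_ge0 ?ltW.
have qo : q <= d i ^+ 2 / om by rewrite ler_pdivlMr // mulrAC ler_pdivrMr // ler_wpM2l ?sqr_ge0.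
have h1 : (p1 i - p2 i) * q <= z * q.
  by apply: ler_wpM2r => //; apply: le_trans (ler_norm _) (pz i).
have z0 : 0 <= z by apply: le_trans (normr_ge0 _) (pz i).
have h2 : z * q <= z * (d i ^+ 2 / om) by apply: ler_wpM2l.
rewrite mulrBl in h1; lra.
Qed.

Theorem lemma4 (R : rcfType) (N : nat) (tau : nat -> R) (omega eps zeta : R)
  (K : 'I_N -> 'I_N -> R) (Ahat A : 'I_N -> R) (wstar : 'I_N -> R) :
  (1 <= N)%N ->
  tau 0%N = 0 -> tau N = 1 ->
  (forall i : nat, (i < N)%N -> tau i < tau i.+1) ->
  0 < omega -> omega < (N%:R)^-1 ->
  0 < eps ->
  (forall i l, 0 <= K i l) ->
  (forall i, \sum_(l < N) K i l = 1) ->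
  (forall i, 0 <= Ahat i) ->
  (forall i, 0 <= A i) ->
  Wset omega (what tau K Ahat eps) ->
  Wset omega wstar ->
  (forall w, Wset omega w -> Jobj tau K A eps wstar <= Jobj tau K A eps w) ->
  0 <= zeta ->
  (forall i, `|phi K Ahat eps i - phi K A eps i| <= zeta) ->
  Jobj tau K A eps (what tau K Ahat eps)
    <= Jobj tau K A eps wstar + 2%:R * D2 N tau / omega * zeta.
Proof.
move=> N1 t0 t1 tinc omp omN epsp K0 K1 Ah0 A0 [whW whs] [wsW wss] _ z0 phiz.
set d := @Delta R N tau.
set bh := bcoef K Ahat eps.
set wh := what tau K Ahat eps.
set S := \sum_(l < N) d l * bh l.
have dp i : 0 < d i by rewrite /d /Delta subr_gt0; apply: tinc.
have bh0 i : 0 <= bh i.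
  by rewrite /bh /bcoef; apply: sumr_ge0 => l _; rewrite mulr_ge0 ?sqrtr_ge0.
have whp i : 0 < wh i by apply: lt_le_trans (whW i).
have S0 : 0 <= S by apply: sumr_ge0 => l _; rewrite mulr_ge0 ?bh0 ?ltW.
have Sn0 : S != 0.
  apply/eqP => SE; have := whp (Ordinal N1).
  by rewrite /wh /what -/d -/bh -/S SE invr0 mulr0 ltxx.
have bhn0 i : bh i != 0.
  apply/eqP => bE; have := whp i.
  by rewrite /wh /what -/d -/bh -/S bE mulr0 mul0r ltxx.
pose Jh w := \sum_(i < N) phi K Ahat eps i * d i ^+ 2 / w i.
have Jhwh : Jh wh = S ^+ 2.
  rewrite /Jh expr2 {1}/S mulr_suml; apply: eq_bigr => i _.
  rewrite /wh /what -/d -/bh -/S /phi -/bh.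
  by field; rewrite Sn0 bhn0 gt_eqF ?dp.
have Jhws : S ^+ 2 <= Jh wstar.
  have -> : Jh wstar = \sum_(i < N) (d i * bh i) ^+ 2 / wstar i.
    by apply: eq_bigr => i _; rewrite /phi -/bh exprMn [d i ^+ 2 * _]mulrC.
  by apply: cs_ineq => // j; apply: lt_le_trans (wsW j).
have P1 := @perturb _ _ d _ _ _ _ _ omp whW (fun i => eq_ind _ (fun x => x <= zeta) (phiz i) _ (distrC _ _)).
have P2 := @perturb _ _ d _ _ _ _ _ omp wsW phiz.
rewrite /Jobj -/d; rewrite -/(Jh wh) -/(Jh wstar) in P1 P2 Jhwh Jhws.
rewrite /D2 -/d.
set X := 2%:R * (\sum_(i < N) d i ^+ 2) / omega * zeta in P1 P2 *.
lra.
Qed.
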